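(* Let $p$ be a prime, $Y$ a $\mathbb{Q}$-vector space, $f:\mathbb{Q}_p\to Y$, $s\ge1$, $(N_1,\dots,N_s)\in\mathbb{Z}^s$ and $(a_1,\dots,a_s)\in\mathbb{Q}_p^s$. If $\Delta_{h_1h_2\cdots h_s}f(x)=0$ for all $x\in\mathbb{Q}_p$ and all $(h_1,\dots,h_s)\in\left(\mathbb{Q}_p\setminus(a_1+p^{-N_1}\mathbb{Z}_p)\right)\times\cdots\times\left(\mathbb{Q}_p\setminus(a_s+p^{-N_s}\mathbb{Z}_p)\right)$, then $\Delta_{h_1h_2\cdots h_s}f(x)=0$ for all $(x,h_1,\dots,h_s)\in\mathbb{Q}_p^{s+1}$.
   Context: $\mathbb{Q}_p$ is the field of $p$-adic numbers with $p$-adic absolute value $|\cdot|_p$, $\mathbb{Z}_p=\{x:|x|_p\le1\}$, and $a+p^{-N}\mathbb{Z}_p=\{a+p^{-N}z:z\in\mathbb{Z}_p\}$. $\Delta_hf(x)=f(x+h)-f(x)$ and $\Delta_{h_1h_2\cdots h_s}f(x)=\Delta_{h_1}\left(\Delta_{h_2\cdots h_s}f\right)(x)$ for $s\ge2$. *)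

(* Defs.v *)
(* A concrete model of the field Q_p of p-adic numbers
   (as an additive group together with multiplication/division by p),
   built as the inverse limit  Q_p = lim_n Q_p / p^n Z_p,
   using  Q_p / p^n Z_p  ~=  Z[1/p] / p^n Z  with canonical representatives
   in  Z[1/p] ∩ [0, p^n). *)
From HB Require Import structures.
From mathcomp Require Import all_boot all_order all_algebra.
Set Implicit Arguments. Unset Strict Implicit. Unset Printing Implicit Defensive.
Import Order.TTheory GRing.Theory Num.Theory.
Local Open Scope ring_scope.

Definition pw (p n : nat) : rat := (p%:R) ^+ n.

Definition rmod (r q : rat) : rat := r - (Num.floor (r / q))%:~R * q.

Lemma rmod_range r q : 0 < q -> 0 <= rmod r q < q.
Proof.
move=> q0; rewrite /rmod subr_ge0 ltrBlDl.
have /andP[h1 h2] := floor_itv (r / q).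
rewrite -ler_pdivlMr // h1 /=.
by rewrite ltr_pdivrMr // intrD mulrDl mul1r in h2.
Qed.

Definition dyadic (p : nat) (r : rat) : Prop :=
  exists k : nat, r * pw p k \is a Num.int.

Definition coherent (p : nat) (s : nat -> rat) : Prop :=
  forall n, (s n.+1 - s n) / pw p n \is a Num.int.

(* A p-adic number x is encoded by the sequence (x_n)_n where x_n is the
   unique element of Z[1/p] ∩ [0, p^n) with x ≡ x_n (mod p^n Z_p). *)
Record Qp (p : nat) : Type := MkQp {
  qp_seq : nat -> rat;
  qp_range : forall n, 0 <= qp_seq n < pw p n;
  qp_dyadic : forall n, dyadic p (qp_seq n);
  qp_coh : coherent p qp_seq }.

Lemma qp_pos p (x : Qp p) : (0 < p)%N.
Proof.
case: p x => // x; have /andP[h1 h2] := qp_range x 1.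
by have := le_lt_trans h1 h2; rewrite /pw expr1 ltxx.
Qed.

Lemma pw_gt0 p n : (0 < p)%N -> 0 < pw p n.
Proof. by move=> hp; rewrite /pw exprn_gt0 // ltr0n. Qed.

Lemma dyadicD p a b : dyadic p a -> dyadic p b -> dyadic p (a + b).
Proof.
move=> [k ha] [l hb]; exists (k + l)%N.
rewrite /pw /= exprD mulrDl mulrA; apply: rpredD.
  by apply: rpredM => //; rewrite rpredX ?natr_int.
by rewrite mulrCA; apply: rpredM => //; rewrite rpredX ?natr_int.
Qed.

Lemma dyadicMz p a m : dyadic p a -> m \is a Num.int -> dyadic p (m * a).
Proof. by move=> [k ha] hm; exists k; rewrite -mulrA rpredM. Qed.

Lemma dyadic_int p m : m \is a Num.int -> dyadic p m.
Proof. by move=> hm; exists 0%N; rewrite /pw expr0 mulr1. Qed.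

Lemma pw_int p n : pw p n \is a Num.int.
Proof. by rewrite rpredX ?natr_int. Qed.

Lemma rmod_dyadic p r q : dyadic p r -> q \is a Num.int -> dyadic p (rmod r q).
Proof.
move=> hr hq; rewrite /rmod; apply: dyadicD => //.
rewrite -mulNr; apply: dyadic_int; by rewrite rpredM ?rpredN ?intr_int.
Qed.

Lemma rmod_aux (A B c d q p : rat) : q != 0 ->
  (A - c * (q * p) - (B - d * q)) / q = (A - B) / q - c * p + d.
Proof.
move=> q0; rewrite -[RHS](mulfK q0); congr (_ / _).
rewrite mulrDl mulrBl divfK // opprB [q * p]mulrC mulrA.
rewrite -!addrA; congr (A + _).
by rewrite [RHS]addrCA [- B + _]addrC.
Qed.

Lemma norm_coh p s : (0 < p)%N -> coherent p s ->
  coherent p (fun n => rmod (s n) (pw p n)).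
Proof.
move=> hp hc n; rewrite /rmod.
have q0 : pw p n != 0 by rewrite gt_eqF // pw_gt0.
set f1 := Num.floor _; set f0 := Num.floor _.
have -> : (s n.+1 - f1%:~R * pw p n.+1 - (s n - f0%:~R * pw p n)) / pw p n
   = (s n.+1 - s n) / pw p n - f1%:~R * p%:R + f0%:~R.
  rewrite /pw exprSr.
  by rewrite rmod_aux.
apply: rpredD; last exact: intr_int.
by apply: rpredB; [exact: hc | apply: rpredM; [exact: intr_int| exact: natr_int]].
Qed.

Definition qp_norm p (s : nat -> rat) (hp : (0 < p)%N)
  (hd : forall n, dyadic p (s n)) (hc : coherent p s) : Qp p :=
  @MkQp p (fun n => rmod (s n) (pw p n))
    (fun n => rmod_range (s n) (pw_gt0 n hp))
    (fun n => rmod_dyadic (hd n) (pw_int p n))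
    (norm_coh hp hc).

Lemma add_dyadic p (x y : Qp p) n : dyadic p (qp_seq x n + qp_seq y n).
Proof. exact: dyadicD (qp_dyadic x n) (qp_dyadic y n). Qed.

Lemma add_coh p (x y : Qp p) : coherent p (fun n => qp_seq x n + qp_seq y n).
Proof.
move=> n; rewrite opprD addrACA mulrDl.
by rewrite rpredD ?(qp_coh x n) ?(qp_coh y n).
Qed.

Definition qp_add p (x y : Qp p) : Qp p :=
  qp_norm (qp_pos x) (add_dyadic x y) (add_coh x y).

Lemma opp_dyadic p (x : Qp p) n : dyadic p (- qp_seq x n).
Proof.
by rewrite -mulN1r; apply: dyadicMz (qp_dyadic x n) _; rewrite rpredN rpred1.
Qed.

Lemma opp_coh p (x : Qp p) : coherent p (fun n => - qp_seq x n).
Proof. by move=> n; rewrite -opprD mulNr rpredN (qp_coh x n). Qed.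

Definition qp_opp p (x : Qp p) : Qp p :=
  qp_norm (qp_pos x) (opp_dyadic x) (opp_coh x).

Lemma mulp_dyadic p (x : Qp p) n : dyadic p (p%:R * qp_seq x n).
Proof. exact: dyadicMz (qp_dyadic x n) (natr_int _ _). Qed.

Lemma mulp_coh p (x : Qp p) : coherent p (fun n => p%:R * qp_seq x n).
Proof.
by move=> n; rewrite -mulrBr -mulrA rpredM ?natr_int ?(qp_coh x n).
Qed.

Definition qp_mulp p (x : Qp p) : Qp p :=
  qp_norm (qp_pos x) (mulp_dyadic x) (mulp_coh x).

Lemma divp_dyadic p (x : Qp p) n : dyadic p (qp_seq x n.+1 / p%:R).
Proof.
have p0 : (p%:R : rat) != 0 by rewrite pnatr_eq0 -lt0n (qp_pos x).
have [k hk] := qp_dyadic x n.+1; exists k.+1.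
by rewrite /pw exprS mulrA divfK.
Qed.

Lemma divp_coh p (x : Qp p) : coherent p (fun n => qp_seq x n.+1 / p%:R).
Proof.
move=> n; have := qp_coh x n.+1.
by rewrite /pw exprSr invfM mulrA -mulrBl -mulrA [_^-1 * _]mulrC mulrA.
Qed.

Definition qp_divp p (x : Qp p) : Qp p :=
  qp_norm (qp_pos x) (divp_dyadic x) (divp_coh x).

(* scaling by p^(-N), N : int *)
Definition qp_scale p (N : int) (x : Qp p) : Qp p :=
  match N with
  | Posz n => iter n (@qp_divp p) x
  | Negz n => iter n.+1 (@qp_mulp p) x
  end.

(* Z_p = {x : |x|_p <= 1} = kernel of Q_p -> Q_p / Z_p *)
Definition in_Zp p (x : Qp p) : Prop := qp_seq x 0 = 0.

Definition in_coset p (a : Qp p) (N : int) (h : Qp p) : Prop :=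
  exists2 z, in_Zp z & h = qp_add a (qp_scale N z).

Fixpoint delta p (Y : zmodType) (f : Qp p -> Y) (hs : seq (Qp p)) (x : Qp p) : Y :=
  match hs with
  | [::] => f x
  | h :: hs' => delta f hs' (qp_add x h) - delta f hs' x
  end.

(* Main.v *)
Require Import Defs.
From HB Require Import structures.
From mathcomp Require Import all_boot all_order all_algebra.
From Stdlib Require Import ProofIrrelevance FunctionalExtensionality Classical.
From mathcomp Require Import ring.
Set Implicit Arguments. Unset Strict Implicit. Unset Printing Implicit Defensive.
Import Order.TTheory GRing.Theory Num.Theory.
Local Open Scope ring_scope.

Lemma rmod_shift (r k q : rat) : q != 0 -> k \is a Num.int ->
  rmod (r + k * q) q = rmod r q.
Proof.
move=> q0 hk; rewrite /rmod mulrDl mulfK // floorDrz // intrD (floorK hk).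
by rewrite mulrDl opprD addrACA subrr addr0.
Qed.

Lemma rmod_sub_int (r q : rat) : q \is a Num.int -> rmod r q - r \is a Num.int.
Proof.
by move=> hq; rewrite /rmod addrAC subrr add0r rpredN rpredM // intr_int.
Qed.

Lemma rmod_l (r t q : rat) : q != 0 -> rmod (rmod r q + t) q = rmod (r + t) q.
Proof.
move=> q0.
have -> : rmod r q + t = r + t + (- (Num.floor (r / q))%:~R) * q.
  by rewrite /rmod mulNr addrAC.
by rewrite rmod_shift // rpredN intr_int.
Qed.

Lemma rmod_r (r t q : rat) : q != 0 -> rmod (t + rmod r q) q = rmod (t + r) q.
Proof. by move=> q0; rewrite addrC rmod_l // addrC. Qed.

Lemma rmod_id (r q : rat) : 0 < q -> 0 <= r < q -> rmod r q = r.
Proof.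
move=> q0 /andP[h1 h2]; rewrite /rmod (@floor_def _ _ 0).
  by rewrite mul0r subr0.
rewrite add0r mulr0z divr_ge0 // ?(ltW q0) /=; last by []. have e : (1%:~R : rat) = 1 by []. rewrite e. by rewrite ltr_pdivrMr // mul1r.
Qed.

Lemma qp_ext p (x y : Qp p) : (forall n, qp_seq x n = qp_seq y n) -> x = y.
Proof.
case: x y => sx rx dx cx [sy ry dy cy] /= h.
have e := functional_extensionality _ _ h; subst sy.
by rewrite (proof_irrelevance _ rx ry) (proof_irrelevance _ dx dy)
  (proof_irrelevance _ cx cy).
Qed.

Lemma qp_addE p (x y : Qp p) n :
  qp_seq (qp_add x y) n = rmod (qp_seq x n + qp_seq y n) (pw p n).
Proof. by []. Qed.

Lemma qp_oppE p (x : Qp p) n :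
  qp_seq (qp_opp x) n = rmod (- qp_seq x n) (pw p n).
Proof. by []. Qed.

Lemma pw_neq0 p (x : Qp p) n : pw p n != 0.
Proof. by rewrite gt_eqF // pw_gt0 // (qp_pos x). Qed.

Lemma qp_add_perm p (x u v : Qp p) :
  qp_add x (qp_add u v) = qp_add (qp_add x v) u.
Proof.
apply: qp_ext => n; rewrite !qp_addE rmod_r ?(pw_neq0 x) // rmod_l ?(pw_neq0 x) //.
by rewrite addrA addrAC.
Qed.

Lemma qp_add_perm2 p (x h v : Qp p) :
  qp_add (qp_add x h) v = qp_add (qp_add x v) h.
Proof.
apply: qp_ext => n; rewrite !qp_addE !rmod_l ?(pw_neq0 x) //.
by rewrite addrAC.
Qed.

Lemma qp_add_sub p (u h : Qp p) : qp_add u (qp_add h (qp_opp u)) = h.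
Proof.
apply: qp_ext => n; rewrite !qp_addE qp_oppE rmod_r ?(pw_neq0 u) //.
rewrite addrA rmod_r ?(pw_neq0 u) // addrAC subrr add0r rmod_id //.
  exact: pw_gt0 (qp_pos u).
exact: qp_range.
Qed.


Lemma zp_int p (z : Qp p) : in_Zp z -> forall m, qp_seq z m \is a Num.int.
Proof.
move=> hz; elim=> [|m IH]; first by rewrite hz.
have -> : qp_seq z m.+1 = qp_seq z m + (qp_seq z m.+1 - qp_seq z m) / pw p m * pw p m.
  by rewrite divfK ?(pw_neq0 z) // addrC subrK.
by rewrite rpredD // rpredM // ?(qp_coh z m) // pw_int.
Qed.

Lemma divp_int p (x : Qp p) : (forall m, qp_seq x m \is a Num.int) ->
  forall n m, qp_seq (iter n (@qp_divp p) x) m * pw p n \is a Num.int.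
Proof.
move=> hx; elim=> [|n IH] m /=; first by rewrite /pw expr0 mulr1 hx.
set y := iter n _ x.
have p0 : (p%:R : rat) != 0 by rewrite pnatr_eq0 -lt0n (qp_pos x).
have -> : qp_seq (qp_divp y) m * pw p n.+1 =
   qp_seq y m.+1 * pw p n - (Num.floor (qp_seq y m.+1 / p%:R / pw p m))%:~R * (pw p m * pw p n.+1).
  rewrite /= /rmod /pw exprS mulrBl; congr (_ - _).
    by rewrite mulrA divfK.
  by rewrite !mulrA.
by rewrite rpredB // ?IH // rpredM // ?intr_int // ?rpredM // ?pw_int.
Qed.

Lemma mulp_zero p (x : Qp p) : qp_seq x 0 = 0 ->
  forall n, qp_seq (iter n (@qp_mulp p) x) 0 = 0.
Proof.
move=> hx; elim=> [|n IH] //=.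
rewrite IH mulr0 rmod_id // ?lexx ?pw_gt0 ?(qp_pos x) //=.
Qed.

Definition Mof (N : int) : nat := match N with Posz n => n | Negz _ => 0%N end.

Lemma coset_frac p (a h : Qp p) N : in_coset a N h ->
  (qp_seq h 0 - qp_seq a 0) * pw p (Mof N) \is a Num.int.
Proof.
move=> [z hz ->].
have hw : qp_seq (qp_scale N z) 0 * pw p (Mof N) \is a Num.int.
  case: N => n; first exact: divp_int (zp_int hz) n 0.
  by rewrite /qp_scale mulp_zero // mul0r.
change (qp_seq (qp_add a (qp_scale N z)) 0) with
  (rmod (qp_seq a 0 + qp_seq (qp_scale N z) 0) (pw p 0)).
have -> : rmod (qp_seq a 0 + qp_seq (qp_scale N z) 0) (pw p 0) - qp_seq a 0 =
  (rmod (qp_seq a 0 + qp_seq (qp_scale N z) 0) (pw p 0) -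
     (qp_seq a 0 + qp_seq (qp_scale N z) 0)) + qp_seq (qp_scale N z) 0.
  by rewrite opprD addrA subrK.
rewrite mulrDl rpredD // rpredM // ?pw_int // rmod_sub_int // pw_int.
Qed.

Lemma small_nonint p (k : nat) : (2 <= p)%N -> (0 < k < 3)%N ->
  ~ ((k%:R / pw p 2 : rat) \is a Num.int).
Proof.
move=> hp hk hi.
have P0 : (0 : rat) < pw p 2 by rewrite pw_gt0 // (leq_trans _ hp).
have : (k%:R / pw p 2 : rat) \is a Num.nat.
  by rewrite -intrEge0 // divr_ge0 // ?ler0n // ltW.
move=> /natrP [n hn].
have : (k%:R : rat) = (n * (p * p))%:R.
  by rewrite natrM -hn natrM /pw expr2 divfK // -natrM pnatr_eq0 -lt0n muln_gt0 (leq_trans _ hp).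
move/eqP; rewrite eqr_nat => /eqP e.
have hp2 : (4 <= p * p)%N by rewrite (leq_mul hp hp).
case: n e {hn} => [|n] e; first by move: hk; rewrite e.
move: hk; rewrite e => /andP [_ h3].
have : (4 <= n.+1 * (p * p))%N by rewrite (leq_trans hp2) // leq_pmull.
by rewrite leqNgt (leq_trans h3).
Qed.
Definition cc p M (j : nat) : rat := j%:R / pw p M.+2.
Lemma aux (A B : rat) (i j : nat) : (i <= j)%N -> A != 0 -> B != 0 ->
  (j%:R / (A * B) - i%:R / (A * B)) * A = (j - i)%:R / B.
Proof.
move=> hij hA hB; rewrite natrB // -mulrBl invfM mulrA -[_ * A]mulrA.
by rewrite [B^-1 * A]mulrC mulrA divfK.
Qed.
Lemma x1 p M (i j : nat) : (2 <= p)%N -> (i < j)%N ->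
 (cc p M j - cc p M i) * pw p M = (j - i)%:R / pw p 2.
Proof.
move=> hp hij.
  have hM : pw p M != 0 by rewrite gt_eqF // pw_gt0 // (leq_trans _ hp).
  have h2 : pw p 2 != 0 by rewrite gt_eqF // pw_gt0 // (leq_trans _ hp).
  have e2 : pw p M.+2 = pw p M * pw p 2 by rewrite /pw -exprD addn2.
  have := @aux _ _ i j (ltnW hij) hM h2; rewrite -e2; exact.
Qed.

Lemma cc_nonint p M (i j : nat) : (2 <= p)%N -> (i < j < 3)%N ->
  ~ ((cc p M j - cc p M i) * pw p M \is a Num.int) /\
  ~ ((cc p M i - cc p M j) * pw p M \is a Num.int).
Proof.
move=> hp /andP [hij hj3].
have e := x1 M hp hij.
have hk : (0 < j - i < 3)%N by rewrite subn_gt0 hij /= (leq_ltn_trans (leq_subr _ _)).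
split; first by rewrite e; exact: small_nonint.
by rewrite -opprB mulNr rpredN e; exact: small_nonint.
Qed.

Lemma cc_range p M j : (2 <= p)%N -> (j < 3)%N -> 0 <= cc p M j < 1.
Proof.
move=> hp hj; have P0 : (0:rat) < pw p M.+2 by rewrite pw_gt0 // (leq_trans _ hp).
rewrite /cc divr_ge0 ?ler0n ?ltW //= ltr_pdivrMr // mul1r.
have h4 : (4 <= p ^ M.+2)%N.
  rewrite expnS expnS mulnA.
  have h1 : (0 < p ^ M)%N by rewrite expn_gt0 (leq_trans _ hp).
  have h2 : (4 <= p * p)%N by exact: (leq_mul hp hp).
  exact: leq_trans h2 (leq_pmulr _ h1).
rewrite /pw -natrX ltr_nat.
apply: leq_trans hj _; exact: leq_trans _ h4.
Qed.

Lemma cst_coh p (c : rat) : coherent p (fun _ => c).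
Proof. by move=> n; rewrite subrr mul0r rpred0. Qed.

Definition cst p (hp : (0 < p)%N) (c : rat) (hc : dyadic p c) : Qp p :=
  qp_norm hp (fun _ => hc) (@cst_coh p c).

Lemma cc_dy p M j : (0 < p)%N -> dyadic p (cc p M j).
Proof.
move=> hp; exists M.+2; rewrite /cc divfK ?natr_int //.
by rewrite gt_eqF // pw_gt0.
Qed.

Lemma pair_u (x y a P : rat) : (x - a) * P \is a Num.int -> (y - a) * P \is a Num.int ->
  (y - x) * P \is a Num.int.
Proof.
move=> h1 h2; have -> : (y - x) * P = (y - a) * P - (x - a) * P by ring.
by rewrite rpredB.
Qed.

Lemma pair_v (h x y a P : rat) : (h - x - a) * P \is a Num.int ->
  (h - y - a) * P \is a Num.int -> (x - y) * P \is a Num.int.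
Proof.
move=> h1 h2; have -> : (x - y) * P = (h - y - a) * P - (h - x - a) * P by ring.
by rewrite rpredB.
Qed.

Lemma decomp p (hp : prime p) (a : Qp p) (N : int) (h : Qp p) :
  exists u v, ~ in_coset a N u /\ ~ in_coset a N v /\ h = qp_add u v.
Proof.
have hp2 : (2 <= p)%N := prime_gt1 hp.
have hp0 : (0 < p)%N := prime_gt0 hp.
set M := Mof N.
pose u j := @cst p hp0 (cc p M j) (cc_dy M j hp0).
have u0 : forall j, (j < 3)%N -> qp_seq (u j) 0 = cc p M j.
  move=> j hj; rewrite /u /cst /= rmod_id //.
  by rewrite /pw expr0; exact: cc_range.
pose v j := qp_add h (qp_opp (u j)).
set P := pw p M.
set a0 := qp_seq a 0.
set h0 := qp_seq h 0.
have Bu : forall j, (j < 3)%N -> in_coset a N (u j) -> (cc p M j - a0) * P \is a Num.int.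
  by move=> j hj /coset_frac; rewrite u0.
have Bv : forall j, (j < 3)%N -> in_coset a N (v j) ->
    (h0 - cc p M j - a0) * P \is a Num.int.
  move=> j hj /coset_frac H.
  have D : qp_seq (v j) 0 - (h0 - cc p M j) \is a Num.int.
    have -> : qp_seq (v j) 0 - (h0 - cc p M j) =
      (rmod (h0 + rmod (- cc p M j) (pw p 0)) (pw p 0) - (h0 + rmod (- cc p M j) (pw p 0)))
      + (rmod (- cc p M j) (pw p 0) - (- cc p M j)).
      rewrite -(u0 j hj) /v /h0 qp_addE qp_oppE.
      move: (rmod (- qp_seq (u j) 0) (pw p 0)) => R.
      by ring.
    by rewrite rpredD // rmod_sub_int // pw_int.
  have -> : (h0 - cc p M j - a0) * P =
     (qp_seq (v j) 0 - a0) * P - (qp_seq (v j) 0 - (h0 - cc p M j)) * P by ring.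
  by rewrite rpredB // rpredM // pw_int.
suff [j [hj [g1 g2]]] : exists j, (j < 3)%N /\ ~ in_coset a N (u j) /\ ~ in_coset a N (v j).
  by exists (u j), (v j); split=> //; split=> //; rewrite /v qp_add_sub.
apply: NNPP => H.
have Hj : forall j, (j < 3)%N -> (cc p M j - a0) * P \is a Num.int \/
                                  (h0 - cc p M j - a0) * P \is a Num.int.
  move=> j hj; case: (classic (in_coset a N (u j))) => [hu|hu]; first by left; exact: Bu.
  case: (classic (in_coset a N (v j))) => [hv|hv]; first by right; exact: Bv.
  by exfalso; apply: H; exists j.
have C : forall i j, (i < j < 3)%N -> ~ (((cc p M i - a0) * P \is a Num.int /\
        (cc p M j - a0) * P \is a Num.int) \/ ((h0 - cc p M i - a0) * P \is a Num.int /\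
        (h0 - cc p M j - a0) * P \is a Num.int)).
  move=> i j hij; have [n1 n2] := cc_nonint M hp2 hij.
  case=> [[c1 c2]|[c1 c2]]; first by apply: n1; exact: pair_u c1 c2.
  by apply: n2; exact: pair_v c1 c2.
have C01 := C 0%N 1%N erefl; have C02 := C 0%N 2%N erefl; have C12 := C 1%N 2%N erefl.
case: (Hj 0%N erefl) (Hj 1%N erefl) (Hj 2%N erefl) => [a1|a1] [b1|b1] [c1|c1]; tauto.
Qed.

Lemma delta_split p (Y : zmodType) (f : Qp p -> Y) (d : Qp p) (l : seq (Qp p)) k x u v :
  (k < size l)%N ->
  delta f (set_nth d l k (qp_add u v)) x =
  delta f (set_nth d l k u) (qp_add x v) + delta f (set_nth d l k v) x.
Proof.
elim: l k x => [|h l IH] [|k] x //= hk.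
  by rewrite qp_add_perm addrA subrK.
by rewrite !IH // qp_add_perm2 opprD addrACA.
Qed.

Theorem theorem9 (p : nat) (hp : prime p) (Y : lmodType rat) (f : Qp p -> Y)
  (s : nat) (hs1 : (1 <= s)%N) (N : 'I_s -> int) (a : 'I_s -> Qp p) :
  (forall (x : Qp p) (hs : s.-tuple (Qp p)),
     (forall i : 'I_s, ~ in_coset (a i) (N i) (tnth hs i)) ->
     delta f hs x = 0) ->
  forall (x : Qp p) (hs : s.-tuple (Qp p)), delta f hs x = 0.
Proof.
move=> H d hs.
pose P k := forall x (l : seq (Qp p)), size l = s ->
  (forall i : 'I_s, (k <= i)%N -> ~ in_coset (a i) (N i) (nth d l i)) ->
  delta f l x = 0.
have P0 : P 0%N.
  move=> x l hl hg.
  have hsz : size l == s by rewrite hl.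
  have := H x (Tuple hsz); apply => i.
  by rewrite (tnth_nth d); exact: hg.
have PS : forall k, (k < s)%N -> P k -> P k.+1.
  move=> k hk Pk x l hl hg.
  pose ik : 'I_s := Ordinal hk.
  have [u [v [gu [gv e]]]] := decomp hp (a ik) (N ik) (nth d l k).
  have El : set_nth d l k (nth d l k) = l.
    apply: (@eq_from_nth _ d).
      by rewrite size_set_nth hl; apply/maxn_idPr.
    move=> i _; rewrite nth_set_nth /=; by case: eqP => // ->.
  rewrite -El e delta_split ?hl //.
  have hsz : forall w, size (set_nth d l k w) = s.
    by move=> w; rewrite size_set_nth hl; apply/maxn_idPr.
  have hg' : forall w, ~ in_coset (a ik) (N ik) w ->
      forall i : 'I_s, (k <= i)%N -> ~ in_coset (a i) (N i) (nth d (set_nth d l k w) i).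
    move=> w gw i hi; rewrite nth_set_nth /=.
    case: eqP => [ei|ni].
      by have -> : i = ik by apply: val_inj.
    apply: hg; rewrite ltn_neqAle hi andbT; apply/eqP => ei; exact: ni (esym ei).
  by rewrite (Pk _ _ (hsz u) (hg' u gu)) (Pk _ _ (hsz v) (hg' v gv)) addr0.
have Pall : forall k, (k <= s)%N -> P k.
  elim=> [|k IH] hk; first exact: P0.
  exact: PS hk (IH (ltnW hk)).
apply: (Pall s (leqnn s)); first exact: size_tuple.
by move=> i; rewrite leqNgt ltn_ord.
Qed.
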